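(* Let $G=(V,E)$ be an $n$-vertex graph and $\pi\colon[n]\to V$ a fixed bijection. If the longest dependency path with respect to $\pi$ has length $2l+1$ (with $l\ge 0$), then the parallel greedy MIS algorithm run on $G$ with the order $\pi$ terminates within at most $l+1$ rounds.
   Context: Parallel greedy MIS with a fixed order $\pi\colon[n]\to V$ (a bijection; $\pi(i)$ is the vertex at position $i$): in each round, every remaining vertex whose position is smaller than the positions of all its remaining neighbors is added to the independent set, and these vertices together with all their neighbors are removed; rounds are counted until no vertex remains. Let $V^*\subseteq V$ be the MIS produced by the sequential greedy algorithm that processes $\pi(1),\dots,\pi(n)$ in this order and adds a vertex iff none of its neighbors was added before. For $v\notin V^*$, its inhibitor $\mathrm{inhib}(v)$ is the neighbor of $v$ in $V^*$ with minimum position. A sequence of positions $1\le p_1<\dots<p_{2l+1}\le n$ ($l\ge 0$) forms a dependency path of length $2l+1$ (with respect to $\pi$) if (i) $(\pi(p_1),\dots,\pi(p_{2l+1}))$ is a path in $G$; (ii) $\pi(p_k)\in V^*$ for all odd $k$; (iii) $\pi(p_k)\notin V^*$ for all even $k$; (iv) $\pi(p_{k-1})=\mathrm{inhib}(\pi(p_k))$ for all even $k$. The dependency length is the maximum length of a dependency path. *)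

(* Defs.v *)
From mathcomp Require Import all_boot.
Set Implicit Arguments. Unset Strict Implicit. Unset Printing Implicit Defensive.

Section MIS.
Variables (T : finType) (e : rel T) (pi : 'I_#|T| -> T).

Definition order_seq : seq T := [seq pi i | i <- enum 'I_#|T|].

Definition pos (v : T) : nat := index v order_seq.

Fixpoint greedy_aux (s : seq T) (I : {set T}) : {set T} :=
  match s with
  | [::] => I
  | v :: s' => greedy_aux s' (if [exists u in I, e u v] then I else v |: I)
  end.

Definition Vstar : {set T} := greedy_aux order_seq set0.

Definition is_inhib (u v : T) : bool :=
  [&& v \notin Vstar, u \in Vstar, e u v &
      [forall w, (w \in Vstar) && e w v ==> (pos u <= pos w)]].

(* Dependency path given by positions p_1 < ... < p_{2l+1}
   (0-based list index k corresponds to p_{k+1}; so "k odd" in the paper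
   is "k even" here).  The default element of nth is irrelevant since only
   indices k < size p are used. *)
Definition dep_path (p : seq 'I_#|T|) : bool :=
  match p with
  | [::] => false
  | q :: p' =>
    let vs := map pi p in
    [&& odd (size p),
        sorted ltn (map val p),
        path e (pi q) (map pi p'),
        all (fun k => (nth (pi q) vs k \in Vstar) == ~~ odd k) (iota 0 (size p)) &
        all (fun k => odd k ==> is_inhib (nth (pi q) vs k.-1) (nth (pi q) vs k))
            (iota 0 (size p))]
  end.

Definition selected (R : {set T}) : {set T} :=
  [set v in R | [forall u in R, e v u ==> (pos v < pos u)]].

Definition par_round (R : {set T}) : {set T} :=
  [set v in R | (v \notin selected R) && ~~ [exists u in selected R, e u v]].

End MIS.

(* Main.v *)
Require Import Defs.
From mathcomp Require Import all_boot zify.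
Set Implicit Arguments. Unset Strict Implicit.

Lemma greedyP (T : finType) (e : rel T) (s : seq T) (I : {set T}) (x : T) :
  uniq s ->
  (x \in greedy_aux e s I) = (x \in I) || ((x \in s) &&
     [forall u, e u x ==> ~~ ((u \in I) || ((u \in greedy_aux e s I) && (index u s < index x s)))]).
Proof.
elim: s I x => [|v s IH] I x /=; first by rewrite orbF.
case/andP => vs us.
set I' := (if _ then _ else _).
have hI : forall y, y \in I' = (y \in I) || ((y == v) && ~~ [exists u in I, e u v]).
  move=> y; rewrite /I'; case: ifP => h; first by rewrite andbF orbF.
  by rewrite inE in_set1 andbT orbC.
have hIsub : forall y, y \in I -> y \in I' by move=> y; rewrite hI => ->.
have hG : forall y, y \notin s -> (y \in greedy_aux e s I') = (y \in I').
  by move=> y ys; rewrite IH // (negbTE ys) orbF.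
rewrite in_cons.
case: (eqVneq x v) => [-> | xv] /=.
  rewrite hG // hI eqxx /=; congr (_ || _).
  rewrite negb_exists; apply: eq_forallb => u.
  by rewrite ltn0 andbF orbF; case: (u \in I); case: (e u v).
case xs: (x \in s); last by rewrite hG ?xs // hI (negbTE xv).
rewrite IH // xs /= hI (negbTE xv) /= orbF; congr (_ || _).
apply: eq_forallb => u; congr (_ ==> ~~ _).
rewrite hI (eq_sym v u); case: (eqVneq u v) => [-> | uv] /=.
  rewrite hG //.
  have -> : index v s < index x s = false.
    by apply/negbTE; rewrite -leqNgt (memNindex vs) index_size.
  rewrite andbF orbF hI eqxx /= andbT.
  by case: (v \in I); case: [exists u in I, e u v].
by rewrite orbF ltnS.
Qed.

Section Main.
Variables (T : finType) (e : rel T) (pi : 'I_#|T| -> T) (g : T -> 'I_#|T|).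
Hypotheses (esym : symmetric e) (eirr : irreflexive e)
  (pig : cancel pi g) (gpi : cancel g pi).

Local Notation V := (Vstar e pi).
Local Notation pos := (pos pi).

Lemma order_uniq : uniq (order_seq pi).
Proof. rewrite /order_seq map_inj_uniq ?enum_uniq //; exact: can_inj pig. Qed.

Lemma mem_order x : x \in order_seq pi.
Proof. rewrite -[x]gpi; apply: map_f; by rewrite mem_enum. Qed.

Lemma pos_pi i : pos (pi i) = i.
Proof. rewrite /Defs.pos /order_seq index_map ?index_enum_ord //; exact: can_inj pig. Qed.

Lemma pos_inj u v : pos u = pos v -> u = v.
Proof. rewrite -[u]gpi -[v]gpi !pos_pi => /val_inj ->; done. Qed.

Lemma Vstar_char x :
  x \in V = [forall u, e u x ==> ~~ ((u \in V) && (pos u < pos x))].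
Proof.
rewrite {1}/Vstar greedyP ?order_uniq // mem_order inE /=.
by apply: eq_forallb => u; rewrite inE.
Qed.

Lemma indep u v : u \in V -> v \in V -> e u v -> False.
Proof.
move=> uV vV euv.
case: (ltngtP (pos u) (pos v)) => h.
- by move: (vV); rewrite Vstar_char => /forallP/(_ u); rewrite euv uV h.
- by move: (uV); rewrite Vstar_char => /forallP/(_ v); rewrite esym euv vV h.
- by move: euv; rewrite (pos_inj h) eirr.
Qed.

Lemma inhib_ex u : u \notin V -> exists w, is_inhib e pi w u /\ pos w < pos u.
Proof.
move=> uN; move: (uN); rewrite Vstar_char negb_forall => /existsP [w0].
rewrite negb_imply negbK => /andP [ew0 /andP [w0V w0lt]].
pose P := [pred w | (w \in V) && e w u].
have P0 : P w0 by rewrite /P inE /= w0V ew0.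
case: (@arg_minnP _ w0 P pos P0) => w /andP [wV ewu] minw.
exists w; split; last by apply: leq_ltn_trans (minw _ P0) w0lt.
rewrite /is_inhib uN wV ewu /=; apply/forallP => w'; apply/implyP => Pw'.
exact: minw.
Qed.

Definition J (R : {set T}) :=
  forall y, y \in V -> y \notin R -> forall z, e y z -> z \notin R.

Lemma sel_V R x : J R -> x \in selected e pi R -> x \in V.
Proof.
move=> JR; rewrite inE => /andP [xR /forallP H].
rewrite Vstar_char; apply/forallP => u; apply/implyP => eux; apply/negP => /andP [uV ult].
case uR: (u \in R).
- move: (H u); rewrite uR esym eux /= => h.
  by move: ult; rewrite ltnNge ltnW.
- by have := JR u uV (negbT uR) x eux; rewrite xR.
Qed.

Lemma J_step R : J R -> J (par_round e pi R).
Proof.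
move=> JR y yV yN z eyz; apply/negP; rewrite inE => /andP [zR /andP [zS zA]].
case yR: (y \in R); last by have := JR y yV (negbT yR) z eyz; rewrite zR.
move: yN; rewrite inE yR /= negb_and !negbK => /orP [ysel | /existsP [x /andP [xsel exy]]].
- by apply: (negP zA); apply/existsP; exists y; rewrite ysel eyz.
- exact: (indep (sel_V JR xsel) yV exy).
Qed.

Lemma J_iter r : J (iter r (par_round e pi) setT).
Proof.
elim: r => [|r IH] /=; first by move=> y _; rewrite inE.
exact: J_step.
Qed.

Lemma base v : v \in V -> dep_path e pi [:: g v].
Proof. by move=> vV; rewrite /dep_path /= gpi vV. Qed.

Lemma ext x0 L0 b c :
  dep_path e pi (x0 :: L0) -> is_inhib e pi (pi (last x0 L0)) (pi b) ->
  e (pi b) (pi c) -> val (last x0 L0) < val b -> val b < val c ->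
  pi c \in V -> dep_path e pi (x0 :: L0 ++ [:: b; c]).
Proof.
rewrite /dep_path => /and5P [Hodd Hsort Hpath Hall1 Hall2] inh ebc ab bc cV.
have bN : pi b \notin V by case/and4P: inh.
have eab : e (pi (last x0 L0)) (pi b) by case/and4P: inh.
move: Hsort Hodd => /= Hsort Hodd.
apply/and5P; split.
- by rewrite /= size_cat addn2 /= negbK.
- by rewrite /= map_cat cat_path Hsort /= last_map ab bc.
- by rewrite map_cat cat_path Hpath /= last_map eab ebc.
- set L := x0 :: L0.
  change (all (fun k => (nth (pi x0) (map pi (L ++ [:: b; c])) k \in V) == ~~ odd k)
     (iota 0 (size (L ++ [:: b; c])))).
  rewrite size_cat iotaD all_cat; apply/andP; split.
    apply/allP => k; rewrite mem_iota add0n => /andP [_ kn].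
    move/allP: Hall1 => /(_ k); rewrite mem_iota add0n kn => /(_ isT).
    by rewrite map_cat nth_cat size_map kn.
  rewrite add0n /= map_cat !nth_cat size_map ltnn subnn ltnNge leqnSn subSnn /=.
  by rewrite !negbK (negbTE Hodd) (negbTE bN) cV.
- set L := x0 :: L0.
  change (all (fun k => odd k ==> is_inhib e pi (nth (pi x0) (map pi (L ++ [:: b; c])) k.-1)
     (nth (pi x0) (map pi (L ++ [:: b; c])) k))
     (iota 0 (size (L ++ [:: b; c])))).
  rewrite size_cat iotaD all_cat; apply/andP; split.
    apply/allP => k; rewrite mem_iota add0n => /andP [_ kn].
    move/allP: Hall2 => /(_ k); rewrite mem_iota add0n kn => /(_ isT).
    by rewrite map_cat !nth_cat size_map kn (leq_ltn_trans (leq_pred k) kn).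
  rewrite add0n /= map_cat !nth_cat size_map ltnn subnn ltnNge leqnSn subSnn /=.
  rewrite -cat_cons nth_cat /= size_map ltnSn -(size_map pi L0) -last_nth last_map.
  by rewrite inh size_map negbK (negbTE Hodd) implybT.
Qed.

Lemma claim r v : v \in V -> v \in iter r (par_round e pi) setT ->
  exists x0 L0, [/\ dep_path e pi (x0 :: L0), size L0 = r.*2 & pi (last x0 L0) = v].
Proof.
elim: r v => [|r IH] v vV.
  by move=> _; exists (g v), [::]; split; rewrite ?gpi // base.
set R := iter r (par_round e pi) setT.
rewrite iterS -/R inE => /andP [vR /andP [vS _]].
move: vS; rewrite inE vR /= negb_forall => /existsP [u].
rewrite negb_imply => /andP [uR]; rewrite negb_imply -leqNgt => /andP [evu uleq].
have uv : u != v by apply/eqP => E; move: evu; rewrite E eirr.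
have ult : pos u < pos v.
  rewrite ltn_neqAle uleq andbT; apply/eqP => E; by move/eqP: uv; apply; apply: pos_inj.
have uN : u \notin V by apply/negP => uV; apply: (indep uV vV); rewrite esym.
have [w [inh wlt]] := inhib_ex uN.
have wV : w \in V by case/and4P: inh.
have ewu : e w u by case/and4P: inh.
have wR : w \in R.
  case wR: (w \in R) => //.
  by have := J_iter (r:=r) wV (negbT wR) ewu; rewrite uR.
have [x0 [L0 [dp sz lst]]] := IH w wV wR.
exists x0, (L0 ++ [:: g u; g v]); split.
- have hv : forall a, val a = pos (pi a) by move=> a; rewrite pos_pi.
  apply: ext => //; rewrite ?lst ?gpi //.
  + by rewrite esym.
  + by rewrite hv lst hv gpi.
  + by rewrite hv [X in _ < X]hv !gpi.
- by rewrite size_cat sz doubleS addn2.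
- by rewrite last_cat /= gpi.
Qed.

End Main.


Theorem lemma2p1 (T : finType) (e : rel T) (pi : 'I_#|T| -> T) (l : nat) :
  symmetric e -> irreflexive e -> bijective pi ->
  (exists p, dep_path e pi p /\ size p = (2 * l).+1) ->
  (forall p, dep_path e pi p -> size p <= (2 * l).+1) ->
  iter l.+1 (par_round e pi) [set: T] = set0.
Proof.
move=> esym eirr [g pig gpi] _ Hb.
apply/setP => v; rewrite in_set0; apply/negP => vin.
have [w [wV win]] : exists w, w \in Vstar e pi /\ w \in iter l.+1 (par_round e pi) setT.
  case vV: (v \in Vstar e pi); first by exists v.
  have [w [inh _]] := inhib_ex pig gpi (negbT vV).
  have wV : w \in Vstar e pi by case/and4P: inh.
  have ewv : e w v by case/and4P: inh.
  exists w; split => //.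
  case wI: (w \in _) => //.
  by have := J_iter esym eirr pig gpi (r:=l.+1) wV (negbT wI) ewv; rewrite vin.
have [x0 [L0 [dp sz _]]] := claim esym eirr pig gpi wV win.
have := Hb _ dp; rewrite /= sz; lia.
Qed.
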